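(* There is an absolute constant $C>0$ such that for every integer $k\ge2$ and every reduced integer of the form $n=2^{a_1}3^{a_2}\cdots p_k^{a_k}$ (with $a_i\ge0$), $$\sum_{1\le i\le k,\ a_i\ge 3}(a_i-2)\le C\,\frac{k^{2/3}}{(\log k)^{1/3}}.$$
   Context: Let $p_i$ denote the $i$-th prime ($p_1=2$). A positive integer $\prod_i p_i^{a_i}$ (with $a_i=0$ for all sufficiently large $i$) is called reduced if $\left\lfloor\frac{a_i+1}{a_j+2}\right\rfloor<\frac{\log p_j}{\log p_i}$ for all $i,j\ne 1$, and $2^{a_1}<8p_j^2$ for every $j$ with $a_j=0$. *)

(* Defs.v *)
From mathcomp Require Import all_boot.
From Stdlib Require Import Reals.

Set Implicit Arguments.
Unset Strict Implicit.
Unset Printing Implicit Defensive.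

Lemma exists_prime_above (m : nat) : exists p, (m < p) && prime p.
Proof. have [p Hmp Hp] := prime_above m. by exists p; rewrite Hmp Hp. Qed.

Definition next_prime (m : nat) : nat := ex_minn (exists_prime_above m).

(* pth i = the i-th prime, with pth 1 = 2 (pth 0 = 1 is an unused dummy). *)
Fixpoint pth (i : nat) : nat :=
  match i with
  | 0 => 1
  | i'.+1 => next_prime (pth i')
  end.

(* The integer prod_i p_i^(a i) (a i = 0 for large i) is "reduced", stated on
   its exponent sequence a (indices i >= 1; a 0 is ignored). *)
Definition reduced (a : nat -> nat) : Prop :=
  (forall i j : nat, 2 <= i -> 2 <= j ->
     (INR ((a i).+1 %/ (a j).+2)%N < ln (INR (pth j)) / ln (INR (pth i)))%R)
  /\ (forall j : nat, 1 <= j -> a j = 0 -> 2 ^ (a 1) < 8 * (pth j) ^ 2).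

(* Main.v *)
Require Import Defs.
From mathcomp Require Import all_boot zify.
From Stdlib Require Import Reals Lra.
Local Notation "m ^ n" := (expn m n) : nat_scope.

Lemma next_primeP m : [/\ m < next_prime m, prime (next_prime m) &
   forall q, m < q -> prime q -> next_prime m <= q].
Proof.
rewrite /next_prime; case: ex_minnP => p /andP[H1 H2] H3; split => //.
by move=> q Hq Pq; apply: H3; rewrite Hq Pq.
Qed.

Lemma pth_prime i : 0 < i -> prime (pth i).
Proof. by case: i => // i _ /=; case: (next_primeP (pth i)). Qed.

Lemma pth_lt i : pth i < pth i.+1.
Proof. by rewrite /=; case: (next_primeP (pth i)). Qed.

Lemma pth_ge i : i < pth i.
Proof.
elim: i => // i IH; have := pth_lt i; lia.
Qed.

Lemma pth_all k q : prime q -> q < pth k.+1 -> exists2 i, 0 < i <= k & q = pth i.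
Proof.
elim: k q => [|k IH] q Pq Hq.
  by move: Hq; rewrite /= /next_prime; case: ex_minnP => p /andP[H1 H2] H3;
   have := H3 q; rewrite Pq andbT => /(_ (prime_gt1 Pq)); lia.
case: (ltngtP q (pth k.+1)) => Hqk.
- by have [i /andP[Hi1 Hi2] ->] := IH q Pq Hqk; exists i; rewrite // Hi1 ltnW.
- move: Hq; change (pth k.+2) with (next_prime (pth k.+1)); case: (next_primeP (pth k.+1)) => _ _ H.
  by move=> Hq2; exfalso; have := H q Hqk Pq; lia.
- by exists k.+1 => //; lia.
Qed.

Lemma bin_mono j n : 'C(j, n) <= 'C(j.+1, n).
Proof. case: n => [|n]; first by rewrite !bin0. by rewrite binS leq_addr. Qed.

Lemma bin_lower n : 2 ^ n <= 'C(n.*2, n).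
Proof.
elim: n => [|n IH]; first by rewrite bin0.
have E : n.+1.*2 = (n.*2.+1).+1 by rewrite doubleS.
rewrite E binS.
have E2 : 'C(n.*2.+1, n.+1) = 'C(n.*2.+1, n).
  have h : n.*2.+1 - n = n.+1 by rewrite -addnn; lia.
  by rewrite -h bin_sub // -addnn; lia.
rewrite E2 expnS mul2n -addnn leq_add //; apply: leq_trans IH (bin_mono _ _).
Qed.

Lemma sum_le_T M T : \sum_(1 <= j < M) (j <= T) <= T.
Proof.
suff: forall M, \sum_(1 <= j < M.+1) (j <= T) = minn M T.
  by case: M => [|M] H; [rewrite big_geq | rewrite H; apply: geq_minr].
elim=> [|M0 IH]; first by rewrite big_geq // min0n.
rewrite big_nat_recr //= IH; case: (leqP M0.+1 T) => h /=; lia.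
Qed.

Lemma logn_bin p n : prime p -> 0 < n -> logn p 'C(n.*2, n) <= trunc_log p n.*2.
Proof.
move=> Pp n0.
have p1 := prime_gt1 Pp.
set T := trunc_log p n.*2.
have F : 'C(n.*2, n) * (n`! * n`!) = n.*2`!.
  by have := bin_fact (leq_addr n n); rewrite -addnn addnK.
have C0 : 0 < 'C(n.*2, n) by rewrite bin_gt0 -addnn leq_addr.
have L : logn p n.*2`! = logn p 'C(n.*2, n) + (logn p n`! + logn p n`!).
  by rewrite -F lognM ?muln_gt0 ?fact_gt0 // lognM ?fact_gt0.
have Sn : logn p n`! = \sum_(1 <= j < n.*2.+1) n %/ p ^ j.
  rewrite logn_fact // [RHS](big_cat_nat _ (n:=n.+1)) //=; last by rewrite -addnn ltnS leq_addr.
  rewrite [X in _ = _ + X]big1_seq ?addn0 // => j /andP[_]; rewrite mem_index_iota => /andP[h _].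
  by rewrite divn_small //; apply: leq_trans h (ltnW (ltn_expl _ p1)).
have S2 : logn p n.*2`! = \sum_(1 <= j < n.*2.+1) n.*2 %/ p ^ j by rewrite logn_fact.
have B : \sum_(1 <= j < n.*2.+1) n.*2 %/ p ^ j <=
         \sum_(1 <= j < n.*2.+1) ((n %/ p ^ j + n %/ p ^ j) + (j <= T)).
  apply: leq_sum => j _.
  case: (leqP j T) => hj.
    by rewrite -addnn; apply: (leq_divDl (p ^ j) n n).
  rewrite divn_small //; apply: leq_trans (trunc_log_ltn _ p1) _.
  by rewrite leq_exp2l.
rewrite big_split /= big_split /= -Sn -S2 L in B.
have := sum_le_T (n.*2.+1) T; lia.
Qed.
Lemma prod_le_const (s : seq nat) (F : nat -> nat) c :
  (forall p, p \in s -> F p <= c) -> \prod_(p <- s) F p <= c ^ size s.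
Proof.
elim: s => [|x s IH] H; first by rewrite big_nil.
rewrite big_cons expnS leq_mul //; first by apply: H; rewrite inE eqxx.
by apply: IH => p hp; apply: H; rewrite inE hp orbT.
Qed.

Lemma expn_le_base m n e : m <= n -> m ^ e <= n ^ e.
Proof. by case: e => [|e] h; rewrite ?expn0 // leq_exp2r. Qed.

Lemma cheb k n : n.*2 < pth k.+1 -> 2 ^ n <= pth k.+1 ^ k.
Proof.
move=> Hn.
have P0 : 0 < pth k.+1 by have := pth_ge k.+1; lia.
case: (posnP n) => [->|n0]; first by rewrite expn0 expn_gt0 P0.
set C := 'C(n.*2, n).
have C0 : 0 < C by rewrite bin_gt0 -addnn leq_addr.
have n20 : 0 < n.*2 by rewrite -addnn; lia.
have Hp : forall p, p \in primes C -> p ^ logn p C <= n.*2.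
  move=> p; rewrite mem_primes => /and3P[Pp _ _].
  apply: leq_trans (trunc_logP (prime_gt1 Pp) n20).
  by rewrite leq_exp2l ?prime_gt1 //; apply: logn_bin.
have Hsz : size (primes C) <= k.
  have -> : k = size [seq pth i | i <- iota 1 k] by rewrite size_map size_iota.
  apply: uniq_leq_size; first exact: primes_uniq.
  move=> p hp; have := Hp p hp; move: hp.
  rewrite -logn_gt0 => hl; move: (hl); rewrite logn_gt0 mem_primes => /and3P[Pp _ _] hle.
  have hpP : p < pth k.+1.
    apply: leq_ltn_trans Hn; apply: leq_trans hle.
    by rewrite -{1}(expn1 p) leq_exp2l ?prime_gt1.
  have [i /andP[i1 i2] ->] := pth_all _ _ Pp hpP.
  by apply: map_f; rewrite mem_iota; lia.
apply: leq_trans (bin_lower n) _.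
rewrite -/C {1}(prod_prime_decomp C0) prime_decompE big_map /=.
apply: leq_trans (@prod_le_const _ (fun p => p ^ logn p C) _ Hp) _.
apply: leq_trans (leq_pexp2l n20 Hsz) _.
by apply: expn_le_base; apply: ltnW.
Qed.
Lemma natpowE a b : Nat.pow a b = expn a b.
Proof. elim: b => [|b IH] //=; by rewrite expnS IH multE. Qed.

Lemma INR_expn a b : INR (expn a b) = (INR a ^ b)%R.
Proof. by rewrite -natpowE pow_INR. Qed.

Lemma INR_muln a b : INR (a * b) = (INR a * INR b)%R.
Proof. by rewrite -multE mult_INR. Qed.

Lemma INR_leq a b : a <= b -> (INR a <= INR b)%R.
Proof. by move=> h; apply: le_INR; apply/leP. Qed.

Lemma ln_le' x y : (0 < x)%R -> (x <= y)%R -> (ln x <= ln y)%R.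
Proof.
move=> hx [h|->]; last by apply: Rle_refl.
by apply: Rlt_le; apply: ln_increasing.
Qed.

Lemma exp_le' x y : (x <= y)%R -> (exp x <= exp y)%R.
Proof. move=> [h|->]; [by apply: Rlt_le; apply: exp_increasing | apply: Rle_refl]. Qed.

Arguments INR_leq {a b}.
Arguments ln_le' {x y}.
Lemma ln_le_sub1 x : (0 < x)%R -> (ln x <= x - 1)%R.
Proof. move=> hx; have := exp_ineq1_le (ln x); rewrite exp_ln //; lra. Qed.

Lemma ln_le_20 x : (0 < x)%R -> (ln x <= ln 20 + x / 20 - 1)%R.
Proof.
move=> hx.
have -> : x = (20 * (x / 20))%R by field.
rewrite ln_mult; try lra.
have := ln_le_sub1 (x / 20) ltac:(lra).
have -> : (20 * (x / 20) / 20 = x / 20)%R by field.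
lra.
Qed.
Definition Kc : R := (ln 8 + ln 20 - 1 + ln 4 / 2 + (11/19) * (ln 5 + ln 20 - 1) + (ln 20 - 1) / 3)%R.

Lemma rhs_eq K a t : (exp K * (Rpower a (2/3) / Rpower t (1/3)) =
            exp (K + 2/3 * ln a - 1/3 * ln t))%R.
Proof.
rewrite /Rpower /Rminus !exp_plus !exp_Ropp; field.
repeat split; apply: Rgt_not_eq; apply: exp_pos.
Qed.

Lemma real_final (k s N L P y : nat) :
  2 <= k -> 4 <= P -> s <= N * (L.*2 + 4) -> N * N <= 4 * P -> 1 <= N ->
  2 ^ L <= P -> P <= y.*2 + 2 -> 2 ^ y <= P ^ k ->
  (INR s <= exp Kc * (Rpower (INR k) (2/3) / Rpower (ln (INR k)) (1/3)))%R.
Proof.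
move=> hk hP hs hN hN1 hL hy hc.
set x := INR P. set u := ln x. set t := ln (INR k).
have l2 := ln_lt_2.
have I2 : INR 2 = 2%R by simpl; ring.
have x4 : (4 <= x)%R by rewrite /x; have := INR_leq hP; rewrite /= ; lra.
have u1 : (1 <= u)%R.
  have := exp_le_3; rewrite /u => e3.
  rewrite -[1%R](ln_exp 1); apply: ln_le'; [apply: exp_pos | lra].
have k2 : (2 <= INR k)%R by have := INR_leq hk; rewrite /=; lra.
have t0 : (0 < t)%R.
  rewrite /t -ln_1; apply: ln_increasing; lra.
have HL : (INR L * ln 2 <= u)%R.
  have := INR_leq hL; rewrite INR_expn I2 => h.
  have := ln_le' (pow_lt 2 L ltac:(lra)) h; rewrite ln_pow -/x -/u; lra.
have HL2 : (INR L <= 2 * u)%R.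
  have := pos_INR L => h0; nra.
have N1 : (1 <= INR N)%R by have := INR_leq hN1.
have HN : (2 * ln (INR N) <= ln 4 + u)%R.
  have := INR_leq hN; rewrite !INR_muln (_ : INR 4 = 4%R); last by simpl; ring.
  move=> h; have := ln_le' (Rmult_lt_0_compat (INR N) (INR N) ltac:(lra) ltac:(lra)) h.
  rewrite !ln_mult -/x -/u; lra.
have Hy : (INR y * ln 2 <= INR k * u)%R.
  have := INR_leq hc; rewrite !INR_expn I2 => h.
  have := ln_le' (pow_lt 2 y ltac:(lra)) h; rewrite !ln_pow -/x -/u; lra.
have Hy2 : (INR y <= 2 * INR k * u)%R.
  have := pos_INR y => h0; nra.
have Hx : (x <= INR y * 2 + 2)%R.
  have := INR_leq hy; rewrite /x plus_INR -addnn plus_INR /=; lra.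
have Hx5 : (x <= 5 * INR k * u)%R by nra.
have Hu : (u <= ln 5 + t + ln u)%R.
  have := @ln_le' x _ ltac:(lra) Hx5; rewrite -/u !ln_mult -/t; try nra.
have Hlu := ln_le_20 u ltac:(lra).
have Hlt := ln_le_20 t t0.
have Hs : (INR s <= INR N * (INR L * 2 + 4))%R.
  have := INR_leq hs; rewrite INR_muln plus_INR -addnn plus_INR /=; lra.
have Hs8 : (INR s <= 8 * u * INR N)%R by nra.
have RHS : (exp Kc * (Rpower (INR k) (2/3) / Rpower t (1/3)) =
            exp (Kc + 2/3 * t - 1/3 * ln t))%R.
  by apply: rhs_eq.
rewrite -/t RHS.
case: (posnP s) => [->|s0].
  by rewrite /=; apply: Rlt_le; apply: exp_pos.
have s0R : (0 < INR s)%R by apply: lt_0_INR; apply/ltP.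
rewrite -(exp_ln (INR s)) //; apply: exp_le'.
have := ln_le' s0R Hs8; rewrite (ln_mult (8 * u) (INR N)); try nra.
rewrite (ln_mult 8 u); try lra.
rewrite /Kc; lra.
Qed.
Lemma exp_of_ln (p P m : nat) : 1 < p -> 0 < P ->
  (INR m < ln (INR P) / ln (INR p))%R -> p ^ m < P.
Proof.
move=> p1 P0 H.
have pR : (1 < INR p)%R by apply: lt_1_INR; apply/ltP.
have PR : (0 < INR P)%R by apply: lt_0_INR; apply/ltP.
have lp : (0 < ln (INR p))%R by rewrite -ln_1; apply: ln_increasing; lra.
have H' : (INR m * ln (INR p) < ln (INR P))%R.
  have := Rmult_lt_compat_r _ _ _ lp H.
  by rewrite /Rdiv Rmult_assoc Rinv_l ?Rmult_1_r //; apply: Rgt_not_eq.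
rewrite -ln_pow in H'; last lra.
have := ln_lt_inv _ _ (pow_lt (INR p) m ltac:(lra)) PR H'.
rewrite -INR_expn => h; apply/ltP; apply: INR_lt.
exact: h.
Qed.

Lemma sum_ind_min c N M : \sum_(0 <= i < M) c * (i < N) = c * minn M N.
Proof.
elim: M => [|M IH]; first by rewrite big_geq // min0n muln0.
rewrite big_nat_recr //= IH; case: (ltnP M N) => h /=.
  by rewrite (minn_idPl h) muln1 mulnSr.
by rewrite (minn_idPr (leqW h)) muln0 addn0.
Qed.

Lemma sum_ind_le c N M : \sum_(1 <= i < M) c * (i < N) <= c * N.
Proof.
case: M => [|M]; first by rewrite big_geq.
have := sum_ind_min c N M.+1; rewrite big_ltn // => E.
have : c * minn M.+1 N <= c * N by rewrite leq_mul2l geq_minr orbT.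
lia.
Qed.
Lemma term_bound k a L N : 2 <= k -> (forall i, k < i -> a i = 0) -> reduced a ->
  pth k.+1 < 2 ^ L.+1 -> pth k.+1 < N * N -> 2 <= N ->
  forall i, 1 <= i <= k -> 3 <= a i -> (a i - 2 <= L.*2 + 4) && (i < N).
Proof.
move=> hk hz [H1 H2] hPL hNN hN2 i /andP[hi1 hi2] ha.
set P := pth k.+1 in hPL hNN.
have hak : a k.+1 = 0 by apply: hz.
case: (ltngtP i 1) => hi; first lia.
- have Pi := pth_prime _ (ltnW hi).
  have hpi := pth_ge i.
  have := H1 i k.+1 hi ltac:(lia); rewrite hak => Hm.
  have Hp := exp_of_ln _ P _ (prime_gt1 Pi) ltac:(have := pth_ge k.+1; lia) Hm.
  set m := (a i).+1 %/ 2 in Hp.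
  have m2 : 2 <= m by rewrite /m; lia.
  have h2m : 2 ^ m < 2 ^ L.+1.
    apply: leq_ltn_trans (expn_le_base _ _ m (prime_gt1 Pi)) _.
    by apply: ltn_trans Hp hPL.
  rewrite ltn_exp2l // in h2m.
  apply/andP; split; first by rewrite /m in h2m; lia.
  have hsq : i * i < N * N.
    apply: leq_ltn_trans _ hNN; apply: leq_trans (ltnW Hp).
    apply: leq_trans (leq_pexp2l (prime_gt0 Pi) m2).
    by rewrite expnS expn1 leq_mul // ltnW.
  rewrite ltnNge; apply/negP => hNi.
  by have := leq_mul hNi hNi; lia.
- subst i; apply/andP; split; last by lia.
  have := H2 k.+1 ltac:(lia) hak; rewrite !natpowE -/P => h.
  have h8 : 8 * P ^ 2 < 2 ^ (L.+1 + L.+1 + 3).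
    rewrite !expnD expnS expn1 mulnC.
    by rewrite ltn_pmul2r // ltn_mul.
  have := ltn_trans h h8; rewrite ltn_exp2l //; lia.
Qed.
Theorem lemma3p14 :
  exists C : R, Rlt 0 C /\
    forall (k : nat) (a : nat -> nat),
      2 <= k ->
      (forall i, k < i -> a i = 0) ->
      reduced a ->
      Rle (INR (\sum_(1 <= i < k.+1 | 3 <= a i) (a i - 2)))
          (Rmult C (Rdiv (Rpower (INR k) (2/3)%R) (Rpower (ln (INR k)) (1/3)%R))).
Proof.
exists (exp Kc); split; first exact: exp_pos.
move=> k a hk hz hr.
set P := pth k.+1.
have hP : k.+1 < P := pth_ge k.+1.
set L := trunc_log 2 P.
have hPL : P < 2 ^ L.+1 := trunc_log_ltn P (isT : 1 < 2).
have h2L : 2 ^ L <= P by apply: trunc_logP => //; lia.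
set e := L.+2 %/ 2.
set N := 2 ^ e.
have NN : N * N = 2 ^ (e + e) by rewrite expnD.
have hNN1 : P < N * N.
  rewrite NN; apply: leq_trans hPL _; rewrite leq_exp2l //; rewrite /e; lia.
have hNN2 : N * N <= 4 * P.
  rewrite NN; apply: leq_trans (_ : 2 ^ L.+2 <= _).
    rewrite leq_exp2l //; rewrite /e; lia.
  by rewrite !expnS mulnA leq_mul2l /=.
have hN2 : 2 <= N.
  rewrite /N -{1}(expn1 2) leq_exp2l //; rewrite /e; lia.
have Hs : \sum_(1 <= i < k.+1 | 3 <= a i) (a i - 2) <= N * (L.*2 + 4).
  rewrite big_mkcond /= mulnC.
  apply: leq_trans (sum_ind_le (L.*2 + 4) N k.+1).
  rewrite big_nat_cond [X in _ <= X]big_nat_cond; apply: leq_sum => i /andP[/andP[hi1 hi2] _].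
  case: ifP => ha //.
  have := term_bound k a L N hk hz hr hPL hNN1 hN2 i ltac:(lia) ha.
  by case/andP => h1 ->; rewrite muln1.
have hc : 2 ^ ((P - 1) %/ 2) <= P ^ k by apply: cheb; rewrite -/P; lia.
apply: (real_final k _ N L P ((P - 1) %/ 2)) => //; try lia.
Qed.
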